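(* Let $G$ be a finite group, let $x \in G$ have prime order $p$, and let $N$ be a normal subgroup of $N_G(\langle x\rangle)$ with $|N| = p^{2k+3}$ for some integer $k \ge 0$. Suppose $x \in N$ and that there exist elements $y, \ell, g_1, \ldots, g_k, h_1, \ldots, h_k \in N \cap C_G(x)$, each of order $p$, and an element $\sigma \in N_G(\langle x, y\rangle)$ such that: (i) $y \notin \langle x\rangle$; (ii) every $g_i$ and every $h_i$ commutes with $y$, whereas $\ell$ does not commute with $y$; (iii) for all $i, j \in \{1,\ldots,k\}$, $g_j$ commutes modulo $\langle x\rangle$ with each of $g_i$, $g_i^{\sigma}$ and $h_i$; (iv) for all $i, j \in \{1,\ldots,k\}$ with $i < j$, $g_j$ commutes modulo $\langle x\rangle$ with $h_i^{\sigma}$, but for each $i$, $g_i$ does not commute modulo $\langle x\rangle$ with $h_i^{\sigma}$. Then: (a) every subset $S \subseteq \{x, y, g_1, \ldots, g_k, h_1, \ldots, h_k, h_1^{\sigma}, \ldots, h_k^{\sigma}\}$ generates a $p$-group of order at least $p^{|S|}$; (b) $N = \langle x, y, g_1, \ldots, g_k, h_1, \ldots, h_k, \ell\rangle$; (c) the group $\langle x, y, g_1, \ldots, g_k, h_1, \ldots, h_k, g_1^{\sigma}, \ldots, g_k^{\sigma}, h_1^{\sigma}, \ldots, h_k^{\sigma}\rangle$ is a normal $p$-subgroup of $C_G(\langle x, y\rangle)$.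
   Context: For $a \in G$, $a^{\sigma} = \sigma^{-1} a \sigma$. Two elements $a, b$ ''commute modulo $\langle x\rangle$'' means that their commutator $a^{-1}b^{-1}ab$ lies in $\langle x\rangle$. $C_G(\cdot)$ and $N_G(\cdot)$ denote centraliser and normaliser in $G$. *)

(* Defs.v *)
From mathcomp Require Import all_boot all_fingroup all_solvable.
Set Implicit Arguments. Unset Strict Implicit. Unset Printing Implicit Defensive.

(* Main.v *)
Require Import Defs.
From mathcomp Require Import all_boot all_fingroup all_solvable.
From mathcomp Require Import zify.
From Stdlib Require Import Lia.
Set Implicit Arguments. Unset Strict Implicit. Unset Printing Implicit Defensive.
Local Open Scope group_scope.

Definition Kof (gT : finGroupType) (x w : gT) : {group gT} :=
  (coset <[x]> @*^-1 'C[coset <[x]> w])%G.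

Lemma Kmem (gT : finGroupType) (x w a : gT) :
  a \in 'C[x] -> w \in 'C[x] -> (a \in Kof x w) = ([~ a, w] \in <[x]>).
Proof.
have sub: 'C[x] \subset 'N(<[x]>) by rewrite -cent_cycle cent_sub.
move=> ax wx; have aN := subsetP sub _ ax; have wN := subsetP sub _ wx.
rewrite /Kof /= morphpreE inE /= aN /= inE.
apply/cent1P/idP => [cm | ].
  apply: coset_idr; first by rewrite groupR.
  by rewrite morphR //; apply/eqP/commgP.
move=> /coset_id; rewrite morphR // => /eqP/commgP //.
Qed.

Lemma comm_sym (gT : finGroupType) (X : {group gT}) (a b : gT) :
  ([~ a, b] \in X) = ([~ b, a] \in X).
Proof. by rewrite -invgR groupV. Qed.

Lemma step_card (gT : finGroupType) p (K1 K2 : {group gT}) a :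
  prime p -> p.-group K2 -> K1 \subset K2 -> a \in K2 -> a \notin K1 ->
  (p * #|K1| <= #|K2|)%N.
Proof.
move=> pp pK sK aK naK.
rewrite -(Lagrange sK) (mulnC p) leq_mul2l; apply/orP; right.
have : p.-nat #|K2 : K1| by apply: pnat_dvd (dvdn_indexg _ _) pK.
case/p_natP=> e He.
have : (1 < #|K2 : K1|)%N.
  by rewrite indexg_gt1; apply/negP => /subsetP/(_ a aK); apply/negP.
rewrite He; case: e {He} => [|e] //= _.
rewrite expnS -{1}(muln1 p) leq_mul2l; apply/orP; right.
by rewrite expn_gt0 prime_gt0.
Qed.

Lemma chain (gT : finGroupType) p (P : {group gT}) (e : nat -> gT) n :
  prime p -> p.-group P -> (forall i, (i < n)%N -> e i \in P) ->
  (forall i, (i < n)%N -> e i \notin <<[set e (nat_of_ord j) | j : 'I_i]>>) ->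
  forall I : seq nat, sorted gtn I -> all (gtn n) I ->
  (p ^ size I <= #|<<[set z in map e I]>>|)%N.
Proof.
move=> pp pP eP eN; elim=> [|i I IH] /=.
  by move=> _ _; rewrite expn0 cardG_gt0.
move=> srt /andP[ni aI].
have trg : transitive gtn by move=> a b c /= h1 h2; apply: ltn_trans h2 h1.
have sI := path_sorted srt.
have lI := order_path_min trg srt.
have sK : [set z in map e I] \subset [set z in e i :: map e I].
  by apply/subsetP => z; rewrite !inE => ->; rewrite orbT.
apply: leq_trans (step_card (a := e i) pp _ (genS sK) _ _).
- by rewrite expnS leq_mul2l (IH sI aI) orbT.
- apply: pgroupS pP; rewrite gen_subG; apply/subsetP => z.
  rewrite inE /= inE => /orP[/eqP -> | /mapP[j jI ->]]; first exact: eP.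
  by apply: eP; move/allP: aI => /(_ j jI).
- by apply: mem_gen; rewrite inE mem_head.
apply: contra (eN i ni); apply: subsetP; apply: genS.
apply/subsetP => z; rewrite inE => /mapP[j jI ->].
have ji : (j < i)%N by move/allP: lI => /(_ j jI).
by apply/imsetP; exists (Ordinal ji).
Qed.

Definition eseq (gT : finGroupType) k (x y s : gT) (g h : 'I_k -> gT) (j : nat) : gT :=
  if (j < 1)%N then x else if (j < 2)%N then y
  else if (j < k.+2)%N then oapp g 1 (insub (k.+1 - j) : option 'I_k)
  else if (j < (2 * k).+2)%N then oapp h 1 (insub (j - k.+2) : option 'I_k)
  else (oapp h 1 (insub (j - (2 * k).+2) : option 'I_k)) ^ s.

Section E.
Lemma eseq0 (gT : finGroupType) k (x y s : gT) (g h : 'I_k -> gT) :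
  eseq x y s g h 0 = x.
Proof. by []. Qed.
Lemma eseq1 (gT : finGroupType) k (x y s : gT) (g h : 'I_k -> gT) :
  eseq x y s g h 1 = y.
Proof. by []. Qed.
Lemma eseqg (gT : finGroupType) k (x y s : gT) (g h : 'I_k -> gT) (m : 'I_k) :
  eseq x y s g h (k.+1 - m) = g m.
Proof.
have mk := ltn_ord m; rewrite /eseq ifN; last by lia.
rewrite ifN; last by lia.
rewrite ifT; last by lia.
rewrite subKn; last by lia.
rewrite insubT /=; congr g; exact: val_inj.
Qed.
Lemma eseqh (gT : finGroupType) k (x y s : gT) (g h : 'I_k -> gT) (m : 'I_k) :
  eseq x y s g h (m + k.+2) = h m.
Proof.
have mk := ltn_ord m; rewrite /eseq ifN; last by lia.
rewrite ifN; last by lia.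
rewrite ifN; last by lia.
rewrite ifT; last by lia.
rewrite addnK insubT /=; congr (h _); exact: val_inj.
Qed.
Lemma eseqs (gT : finGroupType) k (x y s : gT) (g h : 'I_k -> gT) (m : 'I_k) :
  eseq x y s g h (m + (2 * k).+2) = h m ^ s.
Proof.
have mk := ltn_ord m; rewrite /eseq ifN; last by lia.
rewrite ifN; last by lia.
rewrite ifN; last by lia.
rewrite ifN; last by lia.
rewrite addnK insubT /=; congr (h _ ^ _); exact: val_inj.
Qed.
Lemma eseq_case (gT : finGroupType) k (x y s : gT) (g h : 'I_k -> gT) j :
  (j < (3 * k).+2)%N ->
  let e := eseq x y s g h in
    (j = 0%N /\ e j = x) \/ (j = 1%N /\ e j = y) \/
    (exists m : 'I_k, j = k.+1 - m /\ e j = g m) \/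
    (exists m : 'I_k, j = m + k.+2 /\ e j = h m) \/
    (exists m : 'I_k, j = m + (2 * k).+2 /\ e j = h m ^ s).
Proof.
move=> jn e.
case: (ltnP j 1) => j1.
  by left; split; [lia | rewrite /e /eseq ifT].
case: (ltnP j 2) => j2.
  by right; left; split; [lia | rewrite /e /eseq ifN ?ifT //; lia].
case: (ltnP j k.+2) => j3.
  have H : (k.+1 - j < k)%N by lia.
  have Ej : j = k.+1 - Ordinal H by rewrite /=; lia.
  by right; right; left; exists (Ordinal H); split => //; rewrite {1}Ej /e eseqg.
case: (ltnP j (2 * k).+2) => j4.
  have H : (j - k.+2 < k)%N by lia.
  have Ej : j = Ordinal H + k.+2 by rewrite /=; lia.
  by right; right; right; left; exists (Ordinal H); split => //; rewrite {1}Ej /e eseqh.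
have H : (j - (2 * k).+2 < k)%N by lia.
have Ej : j = Ordinal H + (2 * k).+2 by rewrite /=; lia.
by right; right; right; right; exists (Ordinal H); split => //; rewrite {1}Ej /e eseqs.
Qed.
End E.

Ltac natlia :=
  repeat match goal with
  | H : ?T |- _ =>
      lazymatch T with
      | is_true (leq _ _) => fail
      | @eq nat _ _ => fail
      | _ => clear H
      end
  end; lia.

Ltac memB := first [ by apply/eqP | by apply/imsetP; eexists; last reflexivity
  | apply/orP; first [left; memB | right; memB] ].
Ltac memW := rewrite ?(in_setU1, in_setU, in_set1); memB.
Theorem lemma2p2 (gT : finGroupType) (G N : {group gT}) (p k : nat)
  (x y l sigma : gT) (g h : 'I_k -> gT) :
  prime p -> x \in G -> #[x] = p ->
  N <| 'N_G(<[x]>) -> #|N| = (p ^ (2 * k + 3))%N -> x \in N ->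
  y \in N :&: 'C_G[x] -> l \in N :&: 'C_G[x] ->
  (forall i, g i \in N :&: 'C_G[x]) -> (forall i, h i \in N :&: 'C_G[x]) ->
  #[y] = p -> #[l] = p -> (forall i, #[g i] = p) -> (forall i, #[h i] = p) ->
  sigma \in 'N_G(<<[set x; y]>>) ->
  (* (i) *) y \notin <[x]> ->
  (* (ii) *) (forall i, commute (g i) y) -> (forall i, commute (h i) y) ->
  ~ commute l y ->
  (* (iii) *)
  (forall i j, [~ g j, g i] \in <[x]>) ->
  (forall i j, [~ g j, g i ^ sigma] \in <[x]>) ->
  (forall i j, [~ g j, h i] \in <[x]>) ->
  (* (iv) *)
  (forall i j : 'I_k, (i < j)%N -> [~ g j, h i ^ sigma] \in <[x]>) ->
  (forall i, [~ g i, h i ^ sigma] \notin <[x]>) ->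
  [/\ (* (a) *)
      (forall S : {set gT},
         S \subset x |: (y |: ([set g i | i : 'I_k] :|: [set h i | i : 'I_k]
                                 :|: [set h i ^ sigma | i : 'I_k])) ->
         p.-group <<S>> /\ (p ^ #|S| <= #|<<S>>|)%N),
      (* (b) *)
      N :=: << x |: (y |: ([set g i | i : 'I_k] :|: [set h i | i : 'I_k]
                              :|: [set l])) >> &
      (* (c) *)
      let H := << x |: (y |: ([set g i | i : 'I_k] :|: [set h i | i : 'I_k]
                     :|: [set g i ^ sigma | i : 'I_k]
                     :|: [set h i ^ sigma | i : 'I_k])) >> in
      p.-group H /\ H <| 'C_G(<<[set x; y]>>)].
Proof.
move=> pp xG ox nN cardN xN yNC lNC gNC hNC oy ol og oh sNZ yX gy hy ly
  ggX ggsX ghX ghsX ghsNX.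
move/setIP: yNC => [yN /setIP[yG yx]].
move/setIP: lNC => [lN /setIP[lG lx]].
have gN i : g i \in N by case/setIP: (gNC i).
have gG i : g i \in G by case/setIP: (gNC i) => _ /setIP[].
have gx i : g i \in 'C[x] by case/setIP: (gNC i) => _ /setIP[].
have hN i : h i \in N by case/setIP: (hNC i).
have hG i : h i \in G by case/setIP: (hNC i) => _ /setIP[].
have hx i : h i \in 'C[x] by case/setIP: (hNC i) => _ /setIP[].
move/setIP: sNZ => [sG sZ].
set Z := <<[set x; y]>> in sZ *.
have xZ : x \in Z by apply: mem_gen; rewrite !inE eqxx.
have yZ : y \in Z by apply: mem_gen; rewrite !inE eqxx orbT.
have cZ a : a \in 'C[x] -> a \in 'C[y] -> a \in 'C(Z).
  move=> ax ay; rewrite cent_gen; apply/centP => z /set2P [] ->; exact/cent1P.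
have CZx : 'C(Z) \subset 'C[x].
  by apply/subsetP => a /centP /(_ x xZ) /cent1P.
have CZy : 'C(Z) \subset 'C[y].
  by apply/subsetP => a /centP /(_ y yZ) /cent1P.
have ZCx : Z \subset 'C[x].
  rewrite gen_subG; apply/subsetP => z /set2P [] ->; first exact: cent1id.
  done.
have ZK w : w \in 'C(Z) -> Z \subset Kof x w.
  move=> wZ; apply/subsetP => z zZ.
  rewrite Kmem; last (by apply: (subsetP CZx)); last by apply: (subsetP ZCx).
  have /commgP/eqP -> : commute z w.
    by move/centP: wZ => /(_ z zZ) /esym.
  exact: group1.
set C := 'C_G(Z).
have CsC : C :^ sigma = C.
  by rewrite /C conjIg -centJ (normP sZ) conjGid.
have inC a : a \in G -> a \in 'C[x] -> a \in 'C[y] -> a \in C.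
  by move=> aG ax ay; rewrite inE aG cZ.
have CC a : a \in C -> a \in 'C(Z) by case/setIP.
have Cx a : a \in C -> a \in 'C[x] by move/CC/(subsetP CZx).
have xC : x \in C by rewrite inC // ?cent1id // cent1C.
have yC : y \in C by rewrite inC // cent1id.
have gC i : g i \in C by rewrite inC //; apply/cent1P; exact: gy.
have hC i : h i \in C by rewrite inC //; apply/cent1P; exact: hy.
have gsC i : g i ^ sigma \in C by rewrite -CsC memJ_conjg.
have hsC i : h i ^ sigma \in C by rewrite -CsC memJ_conjg.
have CnN : C \subset 'N_G(<[x]>).
  apply/subsetP => a aC; rewrite inE (subsetP (subsetIl _ _) _ aC) /=.
  by apply: (subsetP (cent_sub _)); rewrite cent_cycle Cx.
pose M := (C :&: N)%G.
have MnC : M <| C := normalGI CnN nN.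
have pN : p.-group N by rewrite /pgroup cardN pnatX pnat_id.
have pM : p.-group M := pgroupS (subsetIr _ _) pN.
have MsnC : (M :^ sigma)%G <| C by rewrite /= -{1}CsC normalJ.
have pMs : p.-group (M :^ sigma)%G by rewrite pgroupJ.
pose P := 'O_p(C)%G.
have MP : M \subset P := pcore_max pM MnC.
have MsP : M :^ sigma \subset P := pcore_max pMs MsnC.
have pP : p.-group P := pcore_pgroup _ _.
have inM a : a \in C -> a \in N -> a \in M by move=> *; apply/setIP.
have xP : x \in P by rewrite (subsetP MP) ?inM.
have yP : y \in P by rewrite (subsetP MP) ?inM.
have gP i : g i \in P by rewrite (subsetP MP) ?inM.
have hP i : h i \in P by rewrite (subsetP MP) ?inM.
have hsP i : h i ^ sigma \in P by rewrite (subsetP MsP) ?memJ_conjg ?inM.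


pose e := eseq x y sigma g h.
pose n := (3 * k).+2.
have ePn j : (j < n)%N -> e j \in P.
  move=> jn; rewrite /e; case: (eseq_case x y sigma g h jn) =>
    [[_ ->]|[[_ ->]|[[m [_ ->]]|[[m [_ ->]]|[m [_ ->]]]]]] //.
have Kx (a0 w0 : gT) : a0 \in C -> w0 \in C -> (a0 \in Kof x w0) = ([~ a0, w0] \in <[x]>).
  by move=> aC wC; rewrite Kmem ?Cx.
have eN i : (i < n)%N -> e i \notin <<[set e (nat_of_ord j) | j : 'I_i]>>.
  move=> lti; rewrite /e; case: (eseq_case x y sigma g h lti) =>
    [[-> ->]|[[-> ->]|[[m [-> ->]]|[[m [-> ->]]|[m [-> ->]]]]]].
  - apply/negP; rewrite (_ : [set _ | _ : 'I_0] = set0); last first.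
      by apply/setP => z; rewrite inE; apply/imsetP => [[[j]]].
    rewrite gen0 inE => /eqP x1; move: ox; rewrite x1 order1 => p1.
    by rewrite -p1 in pp.
  - apply: contra yX; apply: subsetP; rewrite gen_subG.
    apply/subsetP => z /imsetP [[j /= jl] _ ->].
    by rewrite (_ : j = 0%N) ?cycle_id //; natlia.
  - have mk := ltn_ord m.
    apply: (@contra _ (g m \in Kof x (h m ^ sigma))); last by rewrite Kx.
    apply: subsetP; rewrite gen_subG.
    apply/subsetP => z /imsetP [[j /= jl] _ ->].
    have jn : (j < n)%N by rewrite /n; natlia.
    case: (eseq_case x y sigma g h jn) =>
      [[_ ->]|[[_ ->]|[[m' [Ej ->]]|[[m' [Ej ->]]|[m' [Ej ->]]]]]].
    + exact: (subsetP (ZK _ (CC _ (hsC m)))).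
    + exact: (subsetP (ZK _ (CC _ (hsC m)))).
    + have ? := ltn_ord m'; rewrite Kx //; apply: ghsX; natlia.
    + by exfalso; have ? := ltn_ord m'; natlia.
    + by exfalso; have ? := ltn_ord m'; natlia.
  - have mk := ltn_ord m.
    apply: (@contra _ (h m \in Kof x (g m) :^ sigma^-1)); last first.
      by rewrite mem_conjgV Kx // comm_sym.
    apply: subsetP; rewrite gen_subG.
    apply/subsetP => z /imsetP [[j /= jl] _ ->].
    have jn : (j < n)%N by rewrite /n; natlia.
    rewrite mem_conjgV.
    case: (eseq_case x y sigma g h jn) =>
      [[_ ->]|[[_ ->]|[[m' [Ej ->]]|[[m' [Ej ->]]|[m' [Ej ->]]]]]].
    + by apply: (subsetP (ZK _ (CC _ (gC m)))); rewrite memJ_norm.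
    + by apply: (subsetP (ZK _ (CC _ (gC m)))); rewrite memJ_norm.
    + by rewrite Kx // comm_sym.
    + have ? := ltn_ord m'; rewrite Kx // comm_sym; apply: ghsX; natlia.
    + by exfalso; have ? := ltn_ord m'; natlia.
  - have mk := ltn_ord m.
    apply: (@contra _ (h m ^ sigma \in Kof x (g m))); last first.
      by rewrite Kx // comm_sym.
    apply: subsetP; rewrite gen_subG.
    apply/subsetP => z /imsetP [[j /= jl] _ ->].
    have jn : (j < n)%N by rewrite /n; natlia.
    case: (eseq_case x y sigma g h jn) =>
      [[_ ->]|[[_ ->]|[[m' [Ej ->]]|[[m' [Ej ->]]|[m' [Ej ->]]]]]].
    + exact: (subsetP (ZK _ (CC _ (gC m)))).
    + exact: (subsetP (ZK _ (CC _ (gC m)))).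
    + by rewrite Kx.
    + by rewrite Kx // comm_sym.
    + have ? := ltn_ord m'; rewrite Kx // comm_sym; apply: ghsX; natlia.

have trg : transitive gtn by move=> a b c /= h1 h2; apply: ltn_trans h2 h1.
have srt m : sorted gtn (rev (iota 0 m)).
  by rewrite rev_sorted; exact: iota_ltn_sorted.
pose T := x |: (y |: ([set g i | i : 'I_k] :|: [set h i | i : 'I_k])).
have eT j : (j < (2 * k).+2)%N -> e j \in T.
  move=> jk; have jn : (j < n)%N by rewrite /n; natlia.
  rewrite /e; case: (eseq_case x y sigma g h jn) =>
    [[_ ->]|[[_ ->]|[[m [_ ->]]|[[m [_ ->]]|[m [Ej ->]]]]]]; try memW.
  by exfalso; have ? := ltn_ord m; natlia.
have cA : (p ^ (2 * k).+2 <= #|<<T>>|)%N.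
  have := chain pp pP ePn eN (srt (2 * k).+2).
  rewrite size_rev size_iota => H; apply: leq_trans (H _) _.
    by apply/allP => j; rewrite mem_rev mem_iota /n => /andP[_ ?] /=; natlia.
  apply: subset_leq_card; apply: genS; apply/subsetP => z.
  by rewrite inE => /mapP [j]; rewrite mem_rev mem_iota => /andP[_ ?] ->; apply: eT.
have lM : l \notin M.
  apply/negP => /setIP [/CC /(subsetP CZy) /cent1P lyc _]; exact: ly.
have MN : M \subset N by apply: subsetIr.
have cM : (#|M| <= p ^ (2 * k).+2)%N.
  have Hd : (#|M| %| p ^ (2 * k + 3))%N by rewrite -cardN cardSg.
  have [e' e'le He'] := (elimT (dvdn_pfactor #|M| (2*k+3) pp)) Hd.
  rewrite He'; apply: leq_pexp2l; first exact: prime_gt0.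
  case: (ltnP e' (2 * k + 3)) => H; first by natlia.
  have e'E : e' = (2 * k + 3)%N by natlia.
  have : M == N :> {set gT} by rewrite eqEcard MN He' cardN e'E leqnn.
  by move/eqP => MeN; move: lM; rewrite MeN lN.
have AM : <<T>> = M :> {set gT}.
  apply/eqP; rewrite eqEcard (leq_trans cM cA) andbT gen_subG.
  apply/subsetP => z; rewrite !(in_setU1, in_setU) => /orP [/eqP -> | /orP [/eqP -> | /orP [] /imsetP [i _ ->]]];
    by apply: inM.
have eInv z : z \in x |: (y |: ([set g i | i : 'I_k] :|: [set h i | i : 'I_k]
    :|: [set h i ^ sigma | i : 'I_k])) -> exists2 j, (j < n)%N & e j = z.
  rewrite !(in_setU1, in_setU) => /orP [/eqP -> | /orP [/eqP -> | /orP [/orP [] |] /imsetP [i _ ->]]].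
  - by exists 0%N.
  - by exists 1%N.
  - by exists (k.+1 - i)%N; [have ? := ltn_ord i; rewrite /n; natlia | exact: eseqg].
  - by exists (i + k.+2)%N; [have ? := ltn_ord i; rewrite /n; natlia | exact: eseqh].
  - by exists (i + (2 * k).+2)%N; [have ? := ltn_ord i; rewrite /n; natlia | exact: eseqs].
split.
- move=> S SS.
  have SP : S \subset P.
    apply/subsetP => z /(subsetP SS).
    rewrite !(in_setU1, in_setU) => /orP [/eqP -> | /orP [/eqP -> | /orP [/orP []|] /imsetP [i _ ->]]] //.
  split; first by apply: pgroupS pP; rewrite gen_subG.
  pose I := [seq j <- rev (iota 0 n) | e j \in S].
  have sI : sorted gtn I := sorted_filter trg _ (srt n).
  have aI : all (gtn n) I.
    by apply/allP => j; rewrite mem_filter mem_rev mem_iota => /andP [_ /andP[_ ?]] /=; natlia.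
  have H := chain pp pP ePn eN sI aI.
  have S1 : (#|S| <= size I)%N.
    have : S \subset [set z in map e I].
      apply/subsetP => z zS; have [j jn ejz] := eInv z (subsetP SS z zS).
      rewrite inE; apply/mapP; exists j => //.
      by rewrite mem_filter ejz zS mem_rev mem_iota /=.
    move/subset_leq_card; rewrite cardsE => H1; apply: leq_trans H1 _.
    by rewrite -(size_map e); apply: card_size.
  have S2 : <<[set z in map e I]>> \subset <<S>>.
    apply: genS; apply/subsetP => z; rewrite inE => /mapP [j].
    by rewrite mem_filter => /andP [ejS _] ->.
  apply: leq_trans (leq_pexp2l (prime_gt0 pp) S1) _.
  exact: leq_trans H (subset_leq_card S2).
- have BN : <<x |: (y |: ([set g i | i : 'I_k] :|: [set h i | i : 'I_k] :|: [set l]))>> \subset N.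
    rewrite gen_subG; apply/subsetP => z.
    rewrite !(in_setU1, in_setU, in_set1) => /orP [/eqP -> | /orP [/eqP -> | /orP [/orP [] /imsetP [i _ ->] | /eqP ->]]] //.
  have TB : <<T>> \subset <<x |: (y |: ([set g i | i : 'I_k] :|: [set h i | i : 'I_k] :|: [set l]))>>.
    apply: genS; apply/subsetP => z.
    rewrite !(in_setU1, in_setU) => /orP [/eqP -> | /orP [/eqP -> | /orP [] /imsetP [i _ ->]]]; memW.
  have lB : l \in <<x |: (y |: ([set g i | i : 'I_k] :|: [set h i | i : 'I_k] :|: [set l]))>>.
    by apply: mem_gen; memW.
  have lT : l \notin <<T>> by rewrite AM.
  have H := step_card pp (pgroupS BN pN) TB lB lT.
  apply/eqP; rewrite eq_sym eqEcard BN /= cardN; apply: leq_trans H.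
  rewrite (_ : (2 * k + 3 = ((2 * k).+2).+1)%N); last by natlia.
  by rewrite expnS leq_mul2l cA orbT.
- have ZW : Z \subset <<x |: (y |: ([set g i | i : 'I_k] :|: [set h i | i : 'I_k]
                     :|: [set g i ^ sigma | i : 'I_k]
                     :|: [set h i ^ sigma | i : 'I_k]))>>.
    by apply: genS; apply/subsetP => z /set2P [] ->; memW.
  have HE : <<x |: (y |: ([set g i | i : 'I_k] :|: [set h i | i : 'I_k]
                     :|: [set g i ^ sigma | i : 'I_k]
                     :|: [set h i ^ sigma | i : 'I_k]))>> = M <*> M :^ sigma.
    apply/eqP; rewrite eqEsubset; apply/andP; split.
    - rewrite gen_subG; apply/subsetP => z.
      rewrite !(in_setU1, in_setU) => /orP [/eqP -> | /orP [/eqP -> | /orP [/orP [/orP [] |] |] /imsetP [i _ ->]]];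
        try (by apply: (subsetP (joing_subl _ _)); apply: inM);
        by apply: (subsetP (joing_subr _ _)); rewrite memJ_conjg; apply: inM.
    - rewrite join_subG; apply/andP; split.
      + rewrite -AM; apply: genS; apply/subsetP => z.
        rewrite !(in_setU1, in_setU) => /orP [/eqP -> | /orP [/eqP -> | /orP [] /imsetP [i _ ->]]]; memW.
      + rewrite -AM -genJ gen_subG sub_conjg; apply/subsetP => z.
        rewrite mem_conjgV !(in_setU1, in_setU) => /orP [/eqP -> | /orP [/eqP -> | /orP [] /imsetP [i _ ->]]].
        * by apply: (subsetP ZW); rewrite memJ_norm.
        * by apply: (subsetP ZW); rewrite memJ_norm.
        * by apply: mem_gen; memW.
        * by apply: mem_gen; memW.
  cbv zeta; rewrite HE; split.
    by apply: pgroupS pP; rewrite join_subG MP MsP.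
  exact: normalY MnC MsnC.
Qed.
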